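(* Let $(F_1,+_1,\cdot_1)$ and $(F_2,+_2,\cdot_2)$ be left near-fields and assume $(F_1,+_1,\cdot_1)$ is a division ring. Then the canonical near-vector spaces $((F_1,+_1,\cdot_1),(F_1,\cdot_1))$ and $((F_2,+_2,\cdot_2),(F_2,\cdot_2))$ are isomorphic as near-vector spaces if and only if $(F_1,+_1,\cdot_1)$ and $(F_2,+_2,\cdot_2)$ are isomorphic as near-fields. In particular, if these canonical near-vector spaces are isomorphic, then $(F_2,+_2,\cdot_2)$ is a division ring.
   Context: A left near-field $(F,+,\cdot)$: $(F,+)$ a group with identity $0$, $(F\setminus\{0\},\cdot)$ a group, $0\cdot\alpha=0$, and $\gamma(\alpha+\beta)=\gamma\alpha+\gamma\beta$. A near-field isomorphism is a bijection preserving $+$ and $\cdot$. The canonical near-vector space of $(F,+,\cdot)$ is $((F,+,\cdot),(F,\cdot))$, with $F$ acting on $(F,+)$ by multiplication. An isomorphism $(\Psi,\varphi)$ of near-vector spaces from $((V_1,\boxplus_1,\boxdot_1),(F_1,\cdot_1))$ to $((V_2,\boxplus_2,\boxdot_2),(F_2,\cdot_2))$ consists of an additive bijection $\Psi:V_1\to V_2$ and a group isomorphism $\varphi:(F_1\setminus\{0\},\cdot_1)\to(F_2\setminus\{0\},\cdot_2)$ with $\Psi(\alpha\boxdot_1u)=\varphi(\alpha)\boxdot_2\Psi(u)$ for all $u\in V_1$, $\alpha\in F_1\setminus\{0\}$. *)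

(* Defs.v *)
Set Implicit Arguments.

Record NearField := {
  nf_carrier :> Type;
  nf_add : nf_carrier -> nf_carrier -> nf_carrier;
  nf_mul : nf_carrier -> nf_carrier -> nf_carrier;
  nf_zero : nf_carrier;
  nf_one : nf_carrier;
  nf_add_assoc : forall a b c, nf_add a (nf_add b c) = nf_add (nf_add a b) c;
  nf_add_0l : forall a, nf_add nf_zero a = a;
  nf_add_0r : forall a, nf_add a nf_zero = a;
  nf_add_inv : forall a, exists b, nf_add a b = nf_zero /\ nf_add b a = nf_zero;
  nf_one_neq0 : nf_one <> nf_zero;
  nf_mul_closed : forall a b, a <> nf_zero -> b <> nf_zero -> nf_mul a b <> nf_zero;
  nf_mul_assoc : forall a b c, a <> nf_zero -> b <> nf_zero -> c <> nf_zero ->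
      nf_mul a (nf_mul b c) = nf_mul (nf_mul a b) c;
  nf_mul_1l : forall a, a <> nf_zero -> nf_mul nf_one a = a;
  nf_mul_1r : forall a, a <> nf_zero -> nf_mul a nf_one = a;
  nf_mul_inv : forall a, a <> nf_zero -> exists b, b <> nf_zero /\
      nf_mul a b = nf_one /\ nf_mul b a = nf_one;
  nf_mul_0l : forall a, nf_mul nf_zero a = nf_zero;
  nf_mul_addr : forall g a b, nf_mul g (nf_add a b) = nf_add (nf_mul g a) (nf_mul g b)
}.

Arguments nf_add {n}.
Arguments nf_mul {n}.
Arguments nf_zero {n}.

Definition is_division_ring (F : NearField) : Prop :=
  (forall a b : F, nf_add a b = nf_add b a) /\
  (forall a b c : F, nf_mul (nf_add a b) c = nf_add (nf_mul a c) (nf_mul b c)).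

Definition bijective_fun {A B : Type} (f : A -> B) : Prop :=
  (forall x y, f x = f y -> x = y) /\ (forall y, exists x, f x = y).

Definition nearfield_iso {F1 F2 : NearField} (f : F1 -> F2) : Prop :=
  bijective_fun f /\
  (forall a b, f (nf_add a b) = nf_add (f a) (f b)) /\
  (forall a b, f (nf_mul a b) = nf_mul (f a) (f b)).

Definition nearfield_isomorphic (F1 F2 : NearField) : Prop :=
  exists f : F1 -> F2, nearfield_iso f.

(** A group isomorphism (F1\{0},.) -> (F2\{0},.), represented as a function
    F1 -> F2 whose values are only relevant on nonzero arguments. *)
Definition mult_group_iso {F1 F2 : NearField} (phi : F1 -> F2) : Prop :=
  (forall a, a <> nf_zero -> phi a <> nf_zero) /\
  (forall a b, a <> nf_zero -> b <> nf_zero -> phi (nf_mul a b) = nf_mul (phi a) (phi b)) /\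
  (forall a b, a <> nf_zero -> b <> nf_zero -> phi a = phi b -> a = b) /\
  (forall c, c <> nf_zero -> exists a, a <> nf_zero /\ phi a = c).

Definition canonical_nvs_iso {F1 F2 : NearField} (Psi phi : F1 -> F2) : Prop :=
  bijective_fun Psi /\
  (forall u v, Psi (nf_add u v) = nf_add (Psi u) (Psi v)) /\
  mult_group_iso phi /\
  (forall (u a : F1), a <> nf_zero -> Psi (nf_mul a u) = nf_mul (phi a) (Psi u)).

Definition canonical_nvs_isomorphic (F1 F2 : NearField) : Prop :=
  exists Psi phi : F1 -> F2, canonical_nvs_iso Psi phi.

(* Main.v *)
Require Import Defs.
From Stdlib Require Import Classical.

Lemma add_idem (F : NearField) (x : F) : nf_add x x = x -> x = nf_zero.
Proof.
  intro H. destruct (nf_add_inv F x) as [b [H1 H2]].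
  transitivity (nf_add (nf_add b x) x).
  - rewrite H2, nf_add_0l. reflexivity.
  - rewrite <- nf_add_assoc, H. exact H2.
Qed.

Lemma mul_0r (F : NearField) (g : F) : nf_mul g nf_zero = nf_zero.
Proof. apply add_idem. rewrite <- nf_mul_addr, nf_add_0l. reflexivity. Qed.

Lemma add_map_0 (F1 F2 : NearField) (f : F1 -> F2) :
  (forall a b, f (nf_add a b) = nf_add (f a) (f b)) -> f nf_zero = nf_zero.
Proof. intro H. apply add_idem. rewrite <- H, nf_add_0l. reflexivity. Qed.

Lemma iso_transport (F1 F2 : NearField) (f : F1 -> F2) :
  is_division_ring F1 -> nearfield_iso f -> is_division_ring F2.
Proof.
  intros [Hc Hd] [[Hi Hs] [Ha Hm]]. split.
  - intros x y. destruct (Hs x) as [a <-]. destruct (Hs y) as [b <-].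
    rewrite <- !Ha, Hc. reflexivity.
  - intros x y z. destruct (Hs x) as [a <-]. destruct (Hs y) as [b <-].
    destruct (Hs z) as [c <-].
    rewrite <- Ha, <- !Hm, <- Ha, Hd. reflexivity.
Qed.

Lemma nvs_to_nf (F1 F2 : NearField) : canonical_nvs_isomorphic F1 F2 -> nearfield_isomorphic F1 F2.
Proof.
  intros [Psi [phi [[Hi Hs] [Ha [[Hp0 [Hpm [Hpi Hps]]] Hsc]]]]].
  assert (P0 : Psi nf_zero = nf_zero) by (apply add_map_0; exact Ha).
  assert (Pnz : forall x, x <> nf_zero -> Psi x <> nf_zero).
  { intros x Hx E. apply Hx, Hi. rewrite E, P0. reflexivity. }
  set (e := Psi (nf_one F1)).
  assert (He : e <> nf_zero) by (apply Pnz, nf_one_neq0).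
  destruct (nf_mul_inv F2 He) as [ei [Hei [Hee1 Hee2]]].
  assert (Pphi : forall a, a <> nf_zero -> Psi a = nf_mul (phi a) e).
  { intros a Ha0. unfold e. rewrite <- Hsc by exact Ha0. rewrite nf_mul_1r by exact Ha0. reflexivity. }
  assert (Canc : forall z, nf_mul e (nf_mul ei z) = z).
  { intro z. destruct (classic (z = nf_zero)) as [Hz|Hz].
    - subst z. rewrite !mul_0r. reflexivity.
    - rewrite nf_mul_assoc by assumption. rewrite Hee1. apply nf_mul_1l; assumption. }
  assert (Mz : forall x, x <> nf_zero -> nf_mul ei x <> nf_zero).
  { intros; apply nf_mul_closed; assumption. }
  exists (fun x => nf_mul ei (Psi x)). split; [split|split].
  - intros x y E. apply Hi. rewrite <- (Canc (Psi x)), <- (Canc (Psi y)), E. reflexivity.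
  - intro y. destruct (Hs (nf_mul e y)) as [x Hx]. exists x. rewrite Hx.
    destruct (classic (y = nf_zero)) as [Hy|Hy].
    + subst y. rewrite !mul_0r. reflexivity.
    + rewrite nf_mul_assoc by assumption. rewrite Hee2. apply nf_mul_1l; assumption.
  - intros a b. rewrite Ha, nf_mul_addr. reflexivity.
  - intros a b.
    destruct (classic (a = nf_zero)) as [Ha0|Ha0].
    { subst a. rewrite nf_mul_0l, P0, mul_0r, nf_mul_0l. reflexivity. }
    destruct (classic (b = nf_zero)) as [Hb0|Hb0].
    { subst b. rewrite !mul_0r, P0, !mul_0r. reflexivity. }
    rewrite Hsc by exact Ha0. rewrite (Pphi a Ha0).
    pose proof (Hp0 a Ha0) as Hpa. pose proof (Pnz b Hb0) as Hpb.
    rewrite <- (@nf_mul_assoc F2 ei) by (try apply nf_mul_closed; try apply Mz; assumption).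
    rewrite <- (@nf_mul_assoc F2 (phi a)) by (try apply Mz; assumption).
    rewrite Canc. reflexivity.
Qed.

Theorem mainTheorem10 (F1 F2 : NearField) (hdiv : is_division_ring F1) :
  (canonical_nvs_isomorphic F1 F2 <-> nearfield_isomorphic F1 F2) /\
  (canonical_nvs_isomorphic F1 F2 -> is_division_ring F2).
Proof.
  split; [split|].
  - apply nvs_to_nf.
  - intros [f [[Hi Hs] [Ha Hm]]].
    assert (P0 : f nf_zero = nf_zero) by (apply add_map_0; exact Ha).
    exists f, f. split; [split; assumption|]. split; [exact Ha|]. split; [|intros; apply Hm].
    split; [|split; [|split]].
    + intros a Ha0 E. apply Ha0, Hi. rewrite E, P0. reflexivity.
    + intros; apply Hm.
    + intros; apply Hi; assumption.
    + intros c Hc. destruct (Hs c) as [a Hac]. exists a. split; [|exact Hac].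
      intro E; subst a. apply Hc. rewrite <- Hac. exact P0.
  - intro H. destruct (nvs_to_nf _ _ H) as [f Hf]. exact (iso_transport _ _ _ hdiv Hf).
Qed.
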